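(* Let $\epsilon>0$ and suppose $h\in\operatorname{Isom}^0(\mathbb{E})$ is an $\epsilon$-hyperbolic affine isometry with linear part $g$. Then for all $\delta>0$ and all $x\in\mathbb{E}$, $$B\!\left(h(x),\frac{\delta\epsilon}{4}\right)\cap E^{wu}_{h(x)}(g)\subset h\big(B(x,\delta)\big).$$
   Context: $\mathbb{R}^{2,1}$ is $\mathbb{R}^3$ with $\mathbb{B}(u,v)=u_1v_1+u_2v_2-u_3v_3$; $\mathbb{E}$ is the affine space modelled on it; $\operatorname{Isom}^0(\mathbb{E})$ consists of maps $x\mapsto gx+b$ with $g\in\mathrm{SO}^0(2,1)$ (the linear part). $\rho$ is Euclidean distance and $B(x,\delta)$ the open Euclidean ball. Let $S^1=\{(\cos\phi,\sin\phi,1)\}$. A hyperbolic $g\in\mathrm{SO}^0(2,1)$ has eigenvalues $\lambda<1<\lambda^{-1}$; $x^-(g)$, $x^+(g)$ are the corresponding eigenvectors on $S^1$, and $x^0(g)$ is the eigenvector for $1$ with $\mathbb{B}(x^0(g),x^0(g))=1$ making $(x^-(g),x^+(g),x^0(g))$ positively oriented. $g$ is $\epsilon$-hyperbolic if $\rho(x^+(g),x^-(g))\ge\epsilon$; an affine isometry is $\epsilon$-hyperbolic if its linear part is. $E^{wu}(g)$ is the linear plane spanned by $x^0(g)$ and $x^+(g)$, and $E^{wu}_y(g)=y+E^{wu}(g)$ for $y\in\mathbb{E}$. *)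

(* Defs.v *)
From HB Require Import structures.
From mathcomp Require Import all_boot all_order all_algebra.
From mathcomp Require Import reals trigo.
From Stdlib Require Import ClassicalEpsilon.
Set Implicit Arguments. Unset Strict Implicit. Unset Printing Implicit Defensive.
Import Order.TTheory GRing.Theory Num.Theory.
Local Open Scope ring_scope.

Section Defs.
Variable R : realType.

(* Points of E and vectors of R^{2,1} are column vectors of size 3;
   coordinates (u_1,u_2,u_3) are u (inord 0) 0, u (inord 1) 0, u (inord 2) 0. *)
Notation V := 'cV[R]_3.
Definition c1 (u : V) := u (inord 0) 0.
Definition c2 (u : V) := u (inord 1) 0.
Definition c3 (u : V) := u (inord 2) 0.

Definition Bform (u v : V) : R := c1 u * c1 v + c2 u * c2 v - c3 u * c3 v.

Definition rho (u v : V) : R :=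
  Num.sqrt ((c1 u - c1 v) ^+ 2 + (c2 u - c2 v) ^+ 2 + (c3 u - c3 v) ^+ 2).

Definition ball (x : V) (d : R) : V -> Prop := fun y => rho x y < d.

Definition S1 (v : V) : Prop :=
  exists phi : R, c1 v = cos phi /\ c2 v = sin phi /\ c3 v = 1.

(* SO^0(2,1): linear maps preserving B, of determinant 1, and preserving
   the time orientation (identity component). *)
Definition SO021 (g : 'M[R]_3) : Prop :=
  (forall u v : V, Bform (g *m u) (g *m v) = Bform u v) /\
  \det g = 1 /\ 0 < g (inord 2) (inord 2).

Definition hyperbolic (g : 'M[R]_3) : Prop :=
  exists l : R, 0 < l < 1 /\
    (exists v : V, v != 0 /\ g *m v = l *: v) /\
    (exists w : V, w != 0 /\ g *m w = l^-1 *: w).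

Definition is_xminus (g : 'M[R]_3) (v : V) : Prop :=
  S1 v /\ exists l : R, l < 1 /\ g *m v = l *: v.
Definition is_xplus (g : 'M[R]_3) (v : V) : Prop :=
  S1 v /\ exists l : R, 1 < l /\ g *m v = l *: v.

Definition xminus (g : 'M[R]_3) : V := epsilon (inhabits 0) (is_xminus g).
Definition xplus (g : 'M[R]_3) : V := epsilon (inhabits 0) (is_xplus g).

Definition pos_oriented (a b c : V) : Prop :=
  0 < \det (row_mx a (row_mx b c)).

Definition is_xzero (g : 'M[R]_3) (v : V) : Prop :=
  g *m v = v /\ Bform v v = 1 /\ pos_oriented (xminus g) (xplus g) v.
Definition xzero (g : 'M[R]_3) : V := epsilon (inhabits 0) (is_xzero g).

Definition eps_hyperbolic (eps : R) (g : 'M[R]_3) : Prop :=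
  hyperbolic g /\ eps <= rho (xplus g) (xminus g).

Definition Ewu (g : 'M[R]_3) (y : V) : V -> Prop :=
  fun z => exists a b : R, z = y + a *: xzero g + b *: xplus g.

Definition affine (g : 'M[R]_3) (b : V) (x : V) : V := g *m x + b.

End Defs.

(* Main.v *)
Require Import Defs.
From HB Require Import structures.
From mathcomp Require Import all_boot all_order all_algebra.
From mathcomp Require Import reals trigo.
From mathcomp Require Import ring lra.
From Stdlib Require Import ClassicalEpsilon.
Set Implicit Arguments. Unset Strict Implicit. Unset Printing Implicit Defensive.
Import Order.TTheory GRing.Theory Num.Theory.
Local Open Scope ring_scope.

Section Aux.
Variable R : realType.
Notation V := 'cV[R]_3.
Notation "'I0" := (@inord 2 0).
Notation "'I1" := (@inord 2 1).
Notation "'I2" := (@inord 2 2).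

Lemma ord3_cases (i : 'I_3) : i = 'I0 \/ i = 'I1 \/ i = 'I2.
Proof.
case: i => [[|[|[|k]]] Hk].
- by left; apply: val_inj; rewrite /= inordK.
- by right; left; apply: val_inj; rewrite /= inordK.
- by right; right; apply: val_inj; rewrite /= inordK.
- by [].
Qed.

Lemma sum3 (f : 'I_3 -> R) : \sum_i f i = f 'I0 + f 'I1 + f 'I2.
Proof.
rewrite !big_ord_recr big_ord0 /= add0r.
congr (f _ + f _ + f _); apply: val_inj; by rewrite /= inordK.
Qed.

Lemma vec_eq (u v : V) : c1 u = c1 v -> c2 u = c2 v -> c3 u = c3 v -> u = v.
Proof.
move=> h1 h2 h3; apply/matrixP => i j; rewrite (ord1 j).
by case: (ord3_cases i) => [->|[->|->]].
Qed.

Lemma det3 (A : 'M[R]_3) : \det A =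
  A 'I0 'I0 * (A 'I1 'I1 * A 'I2 'I2 - A 'I1 'I2 * A 'I2 'I1)
  - A 'I0 'I1 * (A 'I1 'I0 * A 'I2 'I2 - A 'I1 'I2 * A 'I2 'I0)
  + A 'I0 'I2 * (A 'I1 'I0 * A 'I2 'I1 - A 'I1 'I1 * A 'I2 'I0).
Proof.
pose a (x y : nat) := A (inord x) (inord y).
have -> : A = \matrix_(i, j) a i j.
  by apply/matrixP => i j; rewrite mxE /a !inord_val.
rewrite (expand_det_row _ ord0) !big_ord_recr big_ord0 /= add0r.
rewrite /cofactor !(expand_det_row _ ord0) !big_ord_recr !big_ord0 /= !add0r.
rewrite /cofactor !det_mx11 !mxE /= !inordK //.
rewrite /bump /=. rewrite !expr0 !expr1 expr2. ring.
Qed.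

Lemma colE (a b c : V) (i : 'I_3) :
  [/\ (row_mx a (row_mx b c) : 'M_3) i 'I0 = a i 0,
      (row_mx a (row_mx b c) : 'M_3) i 'I1 = b i 0 &
      (row_mx a (row_mx b c) : 'M_3) i 'I2 = c i 0].
Proof.
split.
- rewrite (_ : 'I0 = lshift (1 + 1) (0 : 'I_1)).
    exact: (@row_mxEl _ 3 1 (1+1) a (row_mx b c) i 0).
  by apply: val_inj; rewrite /= inordK.
- rewrite (_ : 'I1 = rshift 1 (lshift 1 (0 : 'I_1))).
    rewrite (@row_mxEr _ 3 1 (1+1) a (row_mx b c) i).
    exact: (@row_mxEl _ 3 1 1 b c i 0).
  by apply: val_inj; rewrite /= inordK.
- rewrite (_ : 'I2 = rshift 1 (rshift 1 (0 : 'I_1))).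
    rewrite (@row_mxEr _ 3 1 (1+1) a (row_mx b c) i).
    exact: (@row_mxEr _ 3 1 1 b c i 0).
  by apply: val_inj; rewrite /= inordK.
Qed.

Lemma detcols (a b c : V) : \det (row_mx a (row_mx b c) : 'M_3) =
  c1 a * (c2 b * c3 c - c3 b * c2 c) - c1 b * (c2 a * c3 c - c3 a * c2 c)
  + c1 c * (c2 a * c3 b - c3 a * c2 b).
Proof.
rewrite det3.
have [e1 e2 e3] := colE a b c 'I0.
have [f1 f2 f3] := colE a b c 'I1.
have [h1 h2 h3] := colE a b c 'I2.
rewrite e1 e2 e3 f1 f2 f3 h1 h2 h3 /c1 /c2 /c3; ring.
Qed.
Lemma sqrt_le_of (X Y : R) : 0 <= Y -> X <= Y ^+ 2 -> Num.sqrt X <= Y.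
Proof.
move=> hY hX; rewrite -(ger0_norm hY) -sqrtr_sqr; exact: ler_wsqrtr.
Qed.

Lemma tri (u1 u2 u3 w1 w2 w3 : R) :
  Num.sqrt ((u1+w1)^+2+(u2+w2)^+2+(u3+w3)^+2) <=
  Num.sqrt (u1^+2+u2^+2+u3^+2) + Num.sqrt (w1^+2+w2^+2+w3^+2).
Proof.
set A := u1^+2+u2^+2+u3^+2; set B := w1^+2+w2^+2+w3^+2.
have hA : 0 <= A by rewrite /A; nra.
have hB : 0 <= B by rewrite /B; nra.
have sA := sqr_sqrtr hA; have sB := sqr_sqrtr hB.
have gA := sqrtr_ge0 A; have gB := sqrtr_ge0 B.
set a := Num.sqrt A in sA gA *; set b := Num.sqrt B in sB gB *.
apply: sqrt_le_of; first lra.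
have lag : (u1* w1+u2* w2+u3* w3)^+2 <= A * B.
  have -> : A * B = (u1* w1+u2* w2+u3* w3)^+2 + ((u1* w2-u2* w1)^+2 + (u1* w3-u3* w1)^+2 + (u2* w3-u3* w2)^+2) by rewrite /A /B; ring.
  have := sqr_ge0 (u1* w2-u2* w1); have := sqr_ge0 (u1* w3-u3* w1); have := sqr_ge0 (u2* w3-u3* w2).
  lra.
have dot : u1* w1+u2* w2+u3* w3 <= a * b.
  have hab : (a* b)^+2 = A * B by rewrite exprMn sA sB.
  have gab : 0 <= a * b by nra.
  nra.
have -> : (a + b)^+2 = A + B + 2 * (a * b) by rewrite -sA -sB; ring.
rewrite /A /B; nra.
Qed.

Lemma x0_bound (m1 m2 p1 p2 v1 v2 v3 : R) :
  m1^+2+m2^+2 = 1 -> p1^+2+p2^+2 = 1 ->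
  v1* m1+v2* m2-v3 = 0 -> v1* p1+v2* p2-v3 = 0 -> v1^+2+v2^+2-v3^+2 = 1 ->
  0 < (m1-p1)^+2+(m2-p2)^+2 ->
  ((m1-p1)^+2+(m2-p2)^+2) * (v1^+2+v2^+2+v3^+2) <= 8.
Proof.
move=> hm hp e1 e2 e3.
set r2 := (m1-p1)^+2+(m2-p2)^+2 => hr.
set d1 := m1 - p1; set d2 := m2 - p2; set s1 := m1 + p1; set s2 := m2 + p2.
have wd : v1* d1+v2* d2 = 0.
  have -> : v1* d1+v2* d2 = (v1* m1+v2* m2-v3) - (v1* p1+v2* p2-v3) by rewrite /d1 /d2; ring.
  by rewrite e1 e2 subrr.
have ws : v1* s1+v2* s2 = 2 * v3.
  have -> : v1* s1+v2* s2 = (v1* m1+v2* m2-v3) + (v1* p1+v2* p2-v3) + 2 * v3 by rewrite /s1 /s2; ring.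
  by rewrite e1 e2 !add0r.
have ds : d1* s1+d2* s2 = 0.
  have -> : d1* s1+d2* s2 = (m1^+2+m2^+2) - (p1^+2+p2^+2) by rewrite /d1 /d2 /s1 /s2; ring.
  by rewrite hm hp subrr.
have ss : s1^+2+s2^+2 = 4 - r2.
  have -> : s1^+2+s2^+2 = 2 * (m1^+2+m2^+2) + 2 * (p1^+2+p2^+2) - r2 by rewrite /s1 /s2 /r2; ring.
  by rewrite hm hp; ring.
have id1 : (d1* s2-d2* s1)^+2* (v1^+2+v2^+2) = (s1^+2+s2^+2)* (v1* d1+v2* d2)^+2
   - 2* (d1* s1+d2* s2)* (v1* d1+v2* d2)* (v1* s1+v2* s2) + (d1^+2+d2^+2)* (v1* s1+v2* s2)^+2 by ring.
have id2 : (d1* s2-d2* s1)^+2 = (d1^+2+d2^+2)* (s1^+2+s2^+2) - (d1* s1+d2* s2)^+2 by ring.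
rewrite id2 wd ds ws ss in id1.
have hr' : d1^+2+d2^+2 = r2 by [].
rewrite hr' in id1.
have w2 : v1^+2+v2^+2 = 1 + v3^+2 by lra.
rewrite w2 in id1.
have key0 : r2 * ((4 - r2) * (1 + v3^+2) - 4 * v3^+2) = 0.
  rewrite -[RHS](subrr ((r2 * (4-r2) - 0^+2) * (1+v3^+2))).
  rewrite [X in _ = _ - X]id1. ring.
move/eqP: key0; rewrite mulf_eq0 (negbTE (lt0r_neq0 hr)) /= subr_eq0 => /eqP key.
have -> : v1^+2+v2^+2+v3^+2 = 1 + 2 * v3^+2 by lra.
nra.
Qed.

Lemma c1D (u v : V) : c1 (u + v) = c1 u + c1 v. Proof. by rewrite /c1 mxE. Qed.
Lemma c2D (u v : V) : c2 (u + v) = c2 u + c2 v. Proof. by rewrite /c2 mxE. Qed.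
Lemma c3D (u v : V) : c3 (u + v) = c3 u + c3 v. Proof. by rewrite /c3 mxE. Qed.
Lemma c1Z k (u : V) : c1 (k *: u) = k * c1 u. Proof. by rewrite /c1 mxE. Qed.
Lemma c2Z k (u : V) : c2 (k *: u) = k * c2 u. Proof. by rewrite /c2 mxE. Qed.
Lemma c3Z k (u : V) : c3 (k *: u) = k * c3 u. Proof. by rewrite /c3 mxE. Qed.
Lemma c10 : c1 (0 : V) = 0. Proof. by rewrite /c1 mxE. Qed.
Lemma c20 : c2 (0 : V) = 0. Proof. by rewrite /c2 mxE. Qed.
Lemma c30 : c3 (0 : V) = 0. Proof. by rewrite /c3 mxE. Qed.

Definition mkv (a b c : R) : V := \col_(i < 3) (nth 0 [:: a; b; c] i).
Lemma mkvE a b c : [/\ c1 (mkv a b c) = a, c2 (mkv a b c) = b & c3 (mkv a b c) = c].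
Proof. by rewrite /c1 /c2 /c3 /mkv !mxE !inordK. Qed.

Lemma S1E (v : V) : S1 v -> c1 v ^+ 2 + c2 v ^+ 2 = 1 /\ c3 v = 1.
Proof. by case=> phi [-> [-> ->]]; rewrite cos2Dsin2. Qed.

Lemma S1_exists (w : V) : w != 0 -> Bform w w = 0 -> exists k : R, S1 (k *: w).
Proof.
move=> w0 hB.
have h3 : c3 w != 0.
  apply/negP => /eqP h3; move/negP: w0; apply; apply/eqP.
  move: hB; rewrite /Bform h3 mulr0 subr0 => hB.
  have e1 : c1 w = 0 by apply/eqP; rewrite -sqrf_eq0; apply/eqP; nra.
  have e2 : c2 w = 0 by apply/eqP; rewrite -sqrf_eq0; apply/eqP; nra.
  by apply: vec_eq; rewrite ?c10 ?c20 ?c30.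
exists (c3 w)^-1.
set a := (c3 w)^-1 * c1 w; set bb := (c3 w)^-1 * c2 w.
have hab : a ^+ 2 + bb ^+ 2 = 1.
  have : c1 w * c1 w + c2 w * c2 w = c3 w * c3 w by move: hB; rewrite /Bform => /eqP; rewrite subr_eq0 => /eqP.
  move=> hh.
  have -> : a ^+ 2 + bb ^+ 2 = (c1 w * c1 w + c2 w * c2 w) / (c3 w * c3 w) by rewrite /a /bb; field.
  by rewrite hh divff // mulf_neq0.
have ha : -1 <= a <= 1 by apply/andP; split; nra.
have ha' : a \in `[(-1), 1] by rewrite in_itv /=.
have sa : sin (acos a) = `|bb|.
  by rewrite sin_acos // -sqrtr_sqr; congr Num.sqrt; lra.
case: (lerP 0 bb) => hb.
- exists (acos a); rewrite c1Z c2Z c3Z mulVf //; split; first by rewrite acosK.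
  by rewrite sa ger0_norm.
- exists (- acos a); rewrite c1Z c2Z c3Z mulVf //; split; first by rewrite cosN acosK.
  by rewrite sinN sa ltr0_norm ?opprK.
Qed.

Lemma Bnull (g : 'M[R]_3) (u : V) (k : R) :
  (forall u v : V, Bform (g *m u) (g *m v) = Bform u v) ->
  k ^+ 2 != 1 -> g *m u = k *: u -> Bform u u = 0.
Proof.
move=> Bg hk gu.
have := Bg u u; rewrite gu /Bform !c1Z !c2Z !c3Z => h.
have : (k ^+ 2 - 1) * (c1 u * c1 u + c2 u * c2 u - c3 u * c3 u) = 0.
  rewrite -[RHS](subrr (c1 u * c1 u + c2 u * c2 u - c3 u * c3 u)); rewrite -[X in _ = X - _]h. ring.
by move/eqP; rewrite mulf_eq0 subr_eq0 (negbTE hk) /= => /eqP.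
Qed.

Lemma Bscal (g : 'M[R]_3) (u v : V) (k : R) :
  (forall u v : V, Bform (g *m u) (g *m v) = Bform u v) ->
  g *m v = k *: v -> k * Bform (g *m u) v = Bform u v.
Proof.
move=> Bg gv; rewrite -(Bg u v) gv /Bform !c1Z !c2Z !c3Z; ring.
Qed.


Lemma qid (m1 m2 p1 p2 : R) : m1^+2+m2^+2 = 1 -> p1^+2+p2^+2 = 1 ->
  4 * ((m2-p2)^+2+(p1-m1)^+2-(m1 * p2-m2 * p1)^+2) = ((m1-p1)^+2+(m2-p2)^+2)^+2.
Proof.
move=> hm hp; apply/eqP; rewrite -subr_eq0; apply/eqP.
set u := m1^+2+m2^+2 - 1; set w := p1^+2+p2^+2 - 1; set D := m1 * p1 + m2 * p2.
have -> : 4 * ((m2-p2)^+2+(p1-m1)^+2-(m1 * p2-m2 * p1)^+2) - ((m1-p1)^+2+(m2-p2)^+2)^+2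
  = - 4 * u * w - 4 * (1 - D) * (u + w) - (u + w)^+2 by rewrite /u /w /D; ring.
by rewrite /u /w hm hp subrr; ring.
Qed.

Lemma r2le4 (m1 m2 p1 p2 : R) : m1^+2+m2^+2 = 1 -> p1^+2+p2^+2 = 1 ->
  (m1-p1)^+2+(m2-p2)^+2 <= 4.
Proof.
move=> hm hp.
have -> : (m1-p1)^+2+(m2-p2)^+2 = 2 * (m1^+2+m2^+2) + 2 * (p1^+2+p2^+2) - ((m1+p1)^+2+(m2+p2)^+2) by ring.
rewrite hm hp; have := sqr_ge0 (m1+p1); have := sqr_ge0 (m2+p2); lra.
Qed.

Lemma sqrt_scale (k w1 w2 w3 : R) :
  Num.sqrt ((k * w1)^+2 + (k * w2)^+2 + (k * w3)^+2) = `|k| * Num.sqrt (w1^+2 + w2^+2 + w3^+2).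
Proof.
rewrite (_ : _ + _ + _ = k ^+ 2 * (w1^+2 + w2^+2 + w3^+2)); last by ring.
by rewrite sqrtrM ?sqr_ge0 // sqrtr_sqr.
Qed.

End Aux.

Theorem mainTheorem4 (R : realType) (eps : R) (g : 'M[R]_3) (b : 'cV[R]_3) :
  0 < eps -> SO021 g -> eps_hyperbolic eps g ->
  forall (delta : R) (x : 'cV[R]_3), 0 < delta ->
  forall y : 'cV[R]_3,
    ball (affine g b x) (delta * eps / 4) y -> Ewu g (affine g b x) y ->
    exists z : 'cV[R]_3, ball x delta z /\ affine g b z = y.
Proof.
move=> heps [Bg [detg _]] [[l [/andP [l0 l1] [[v [v0 gv]] [w [w0 gw]]]]] hrho].
move=> delta x hdelta y hball [a [bb hy]].
have xp : is_xplus g (xplus g).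
  apply: epsilon_spec.
  have li : 1 < l^-1 by rewrite invf_gt1.
  have hk : l^-1 ^+ 2 != 1 by rewrite neq_lt; apply/orP; right; nra.
  have [k Sk] := S1_exists w0 (Bnull Bg hk gw).
  exists (k *: w); split => //; exists l^-1; split => //.
  by rewrite -scalemxAr gw !scalerA mulrC.
have xm : is_xminus g (xminus g).
  apply: epsilon_spec.
  have hk : l ^+ 2 != 1 by rewrite neq_lt; apply/orP; left; nra.
  have [k Sk] := S1_exists v0 (Bnull Bg hk gv).
  exists (k *: v); split => //; exists l; split => //.
  by rewrite -scalemxAr gv !scalerA mulrC.
move: hrho hy; rewrite /Ewu.
set p := xplus g; set m := xminus g.
move: xp xm; rewrite -/p -/m.
move=> [Sp [mu [hmu gp]]] [Sm [lm [hlm gm]]] hrho hy.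
have [hp hp3] := S1E Sp; have [hm hm3] := S1E Sm.
set r2 := (c1 m - c1 p)^+2 + (c2 m - c2 p)^+2.
have rhoE : rho p m = Num.sqrt r2.
  by rewrite /rho /r2 hp3 hm3 subrr expr0n /= addr0; congr Num.sqrt; ring.
have r2pos : 0 < r2.
  rewrite -sqrtr_gt0 -rhoE; lra.
have r2le : r2 <= 4 by apply: r2le4.
have Bmp : Bform m p = - r2 / 2.
  rewrite /Bform /r2 hp3 hm3; apply/eqP; rewrite -subr_eq0; apply/eqP.
  have -> : c1 m * c1 p + c2 m * c2 p - 1 * 1 - - ((c1 m - c1 p) ^+ 2 + (c2 m - c2 p) ^+ 2) / 2
    = ((c1 m ^+2 + c2 m ^+2 - 1) + (c1 p ^+2 + c2 p^+2 - 1)) / 2 by field.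
  by rewrite hm hp subrr addr0 mul0r.
have lmmu : lm * mu = 1.
  have := Bg m p; rewrite gm gp /Bform !c1Z !c2Z !c3Z -/(Bform m p) => h.
  have : (lm * mu - 1) * Bform m p = 0.
    rewrite -[RHS](subrr (Bform m p)) -[X in _ = X - _]h /Bform. ring.
  move/eqP; rewrite mulf_eq0 subr_eq0 Bmp => /orP [/eqP //|].
  move=> /eqP h0; exfalso; lra.
have r2n0 : r2 != 0 by rewrite gt_eqF.
have lm0 : lm != 0 by apply/eqP => h0; move: lmmu; rewrite h0 mul0r => /eqP; rewrite eq_sym oner_eq0.
have mu0 : mu != 0 by apply/eqP => h0; move: lmmu; rewrite h0 mulr0 => /eqP; rewrite eq_sym oner_eq0.
set cc1 := c2 m - c2 p; set cc2 := c1 p - c1 m; set cc3 := c1 m * c2 p - c2 m * c1 p.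
set s := 2 / r2.
set vz := mkv (s * cc1) (s * cc2) (- (s * cc3)).
have [ez1 ez2 ez3] := mkvE (s * cc1) (s * cc2) (- (s * cc3)); rewrite -/vz in ez1 ez2 ez3.
set q := cc1 ^+ 2 + cc2 ^+ 2 - cc3 ^+ 2.
have hq : 4 * q = r2 ^+ 2 by apply: qid.
have q0 : q != 0.
  apply/eqP => h0; move: hq; rewrite h0 mulr0 => /eqP; rewrite eq_sym sqrf_eq0.
  by rewrite (negbTE r2n0).
have s0 : s != 0 by rewrite /s mulf_neq0 ?invr_eq0 // pnatr_eq0.
have Bvv : Bform vz vz = 1.
  rewrite /Bform ez1 ez2 ez3.
  have -> : s * cc1 * (s * cc1) + s * cc2 * (s * cc2) - - (s * cc3) * - (s * cc3) = s ^+ 2 * q by rewrite /q; ring.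
  have -> : s ^+ 2 * q = (4 * q) / r2 ^+ 2 by rewrite /s; field.
  by rewrite hq divff // sqrf_eq0.
have Bvm : Bform vz m = 0.
  by rewrite /Bform ez1 ez2 ez3 hm3 /cc1 /cc2 /cc3; ring.
have Bvp : Bform vz p = 0.
  by rewrite /Bform ez1 ez2 ez3 hp3 /cc1 /cc2 /cc3; ring.
have detP : \det (row_mx m (row_mx p vz) : 'M_3) = r2 / 2.
  rewrite detcols ez1 ez2 ez3 hm3 hp3.
  have -> : c1 m * (c2 p * - (s * cc3) - 1 * (s * cc2)) -
    c1 p * (c2 m * - (s * cc3) - 1 * (s * cc2)) + s * cc1 * (c2 m * 1 - 1 * c2 p) = s * q.
    by rewrite /q /cc1 /cc2 /cc3; ring.
  have -> : s * q = (4 * q) / (2 * r2) by rewrite /s; field.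
  by rewrite hq; field.
have gvz : g *m vz = vz.
  set r := g *m vz.
  have Brm : Bform r m = 0.
    have := Bscal vz Bg gm; rewrite Bvm => /eqP; rewrite mulf_eq0 (negbTE lm0) /=.
    by move/eqP.
  have Brp : Bform r p = 0.
    have := Bscal vz Bg gp; rewrite Bvp => /eqP; rewrite mulf_eq0 (negbTE mu0) /=.
    by move/eqP.
  have E1 : c1 r * c1 m + c2 r * c2 m - c3 r = 0.
    by move: Brm; rewrite /Bform hm3 mulr1.
  have E2 : c1 r * c1 p + c2 r * c2 p - c3 r = 0.
    by move: Brp; rewrite /Bform hp3 mulr1.
  set e1 := c1 r * c1 m + c2 r * c2 m - c3 r in E1.
  set e2 := c1 r * c1 p + c2 r * c2 p - c3 r in E2.
  set rc := c1 r * cc1 + c2 r * cc2 + c3 r * cc3.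
  have h1 : q * c1 r = rc * cc1.
    apply/eqP; rewrite -subr_eq0; apply/eqP.
    have -> : q * c1 r - rc * cc1 = - cc2 * (e1 - e2) - cc3 * (c2 p * e1 - c2 m * e2).
      by rewrite /q /rc /e1 /e2 /cc1 /cc2 /cc3; ring.
    by rewrite E1 E2; ring.
  have h2 : q * c2 r = rc * cc2.
    apply/eqP; rewrite -subr_eq0; apply/eqP.
    have -> : q * c2 r - rc * cc2 = cc1 * (e1 - e2) + cc3 * (c1 p * e1 - c1 m * e2).
      by rewrite /q /rc /e1 /e2 /cc1 /cc2 /cc3; ring.
    by rewrite E1 E2; ring.
  have h3 : q * c3 r = - (rc * cc3).
    apply/eqP; rewrite -subr_eq0; apply/eqP.
    have -> : q * c3 r - - (rc * cc3) = cc1 * (c2 p * e1 - c2 m * e2) - cc2 * (c1 p * e1 - c1 m * e2).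
      by rewrite /q /rc /e1 /e2 /cc1 /cc2 /cc3; ring.
    by rewrite E1 E2; ring.
  set k := rc / (q * s).
  have rk : r = k *: vz.
    apply: vec_eq; rewrite ?c1Z ?c2Z ?c3Z ?ez1 ?ez2 ?ez3; apply: (mulfI q0).
    - by rewrite h1 /k; field; apply/andP.
    - by rewrite h2 /k; field; apply/andP.
    - by rewrite h3 /k; field; apply/andP.
  have DP := detcols m p vz; rewrite detP in DP.
  have E : (g *m (row_mx m (row_mx p vz) : 'M_3) : 'M_3) = (row_mx (g *m m) (row_mx (g *m p) r) : 'M_3).
    rewrite -(mul_mx_row g p vz). exact: (mul_mx_row g m (row_mx p vz)).
  have := det_mulmx g (row_mx m (row_mx p vz) : 'M_3).
  rewrite rk in E; rewrite detg mul1r detP E gm gp detcols !c1Z !c2Z !c3Z => H.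
  have : lm * mu * k * (r2 / 2) = r2 / 2 by rewrite [in LHS]DP -[in RHS]H; ring.
  rewrite lmmu mul1r => /eqP; rewrite -subr_eq0 -{2}(mul1r (r2 / 2)) -mulrBl mulf_eq0.
  rewrite subr_eq0 mulf_eq0 (negbTE r2n0) invr_eq0 pnatr_eq0 /= orbF => /eqP k1.
  by rewrite rk k1 scale1r.
have xz : is_xzero g (xzero g).
  apply: epsilon_spec; exists vz; split=> //; split=> //.
  rewrite /pos_oriented -/p -/m.
  have -> : \det (row_mx m (row_mx p vz)) = r2 / 2 by exact: detP.
  lra.
move: hy xz; set x0 := xzero g => hy [gx0 [Bx0 _]].
have Bx0m : Bform x0 m = 0.
  have := Bscal x0 Bg gm; rewrite gx0 => h.
  have : (lm - 1) * Bform x0 m = 0 by rewrite mulrBl h mul1r subrr.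
  move/eqP; rewrite mulf_eq0 subr_eq0 => /orP [/eqP h1|/eqP //]; lra.
have Bx0p : Bform x0 p = 0.
  have := Bscal x0 Bg gp; rewrite gx0 => h.
  have : (mu - 1) * Bform x0 p = 0 by rewrite mulrBl h mul1r subrr.
  move/eqP; rewrite mulf_eq0 subr_eq0 => /orP [/eqP h1|/eqP //]; lra.
have nb : r2 * (c1 x0 ^+ 2 + c2 x0 ^+ 2 + c3 x0 ^+ 2) <= 8.
  apply: x0_bound => //.
  - by move: Bx0m; rewrite /Bform hm3 mulr1.
  - by move: Bx0p; rewrite /Bform hp3 mulr1.
set hx := affine g b x.
set u1 := a * c1 x0 + bb * c1 p; set u2 := a * c2 x0 + bb * c2 p; set u3 := a * c3 x0 + bb * c3 p.
set Nu := Num.sqrt (u1 ^+ 2 + u2 ^+ 2 + u3 ^+ 2).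
have hNu : rho hx y = Nu.
  rewrite /rho hy !c1D !c2D !c3D !c1Z !c2Z !c3Z; congr Num.sqrt; rewrite /u1 /u2 /u3; ring.
rewrite /ball hNu in hball.
set t := mu^-1.
have t0 : 0 < t by rewrite invr_gt0; lra.
have t1 : t < 1 by rewrite invf_lt1 //; lra.
set X := Num.sqrt (c1 x0 ^+ 2 + c2 x0 ^+ 2 + c3 x0 ^+ 2).
have X0 : 0 <= X by apply: sqrtr_ge0.
have Nu0 : 0 <= Nu by apply: sqrtr_ge0.
have Bpp : c1 p ^+ 2 + c2 p ^+ 2 - c3 p ^+ 2 = 0 by rewrite hp3 hp; ring.
have a2 : a ^+ 2 = u1 ^+ 2 + u2 ^+ 2 - u3 ^+ 2.
  have -> : u1 ^+ 2 + u2 ^+ 2 - u3 ^+ 2 = a ^+ 2 * Bform x0 x0 + 2 * a * bb * Bform x0 p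
     + bb ^+ 2 * (c1 p ^+ 2 + c2 p ^+ 2 - c3 p ^+ 2) by rewrite /u1 /u2 /u3 /Bform; ring.
  by rewrite Bx0 Bx0p Bpp; ring.
have aNu : `|a| <= Nu.
  rewrite -sqrtr_sqr; apply: ler_wsqrtr; rewrite a2; have := sqr_ge0 u3; lra.
have rX : rho p m * X <= 3.
  rewrite rhoE -sqrtrM; last lra.
  apply: sqrt_le_of; lra.
have rle : rho p m <= 2 by rewrite rhoE; apply: sqrt_le_of; lra.
have rX0 : 0 <= rho p m * X by rewrite rhoE; apply: mulr_ge0 => //; apply: sqrtr_ge0.
set z := x + a *: x0 + (bb / mu) *: p.
exists z; split; last first.
  rewrite hy /hx /z /affine !mulmxDr -!scalemxAr gx0 gp scalerA divfK //.
  by apply: vec_eq; rewrite ?c1D ?c2D ?c3D ?c1Z ?c2Z ?c3Z; ring.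
have rz : rho x z = Num.sqrt ((t * (- u1) + (1 - t) * (- (a * c1 x0)))^+2
   + (t * (- u2) + (1 - t) * (- (a * c2 x0)))^+2 + (t * (- u3) + (1 - t) * (- (a * c3 x0)))^+2).
  rewrite /rho /z !c1D !c2D !c3D !c1Z !c2Z !c3Z; congr Num.sqrt; rewrite /u1 /u2 /u3 /t; field.
  exact: mu0.
rewrite /ball rz.
apply: (le_lt_trans (tri _ _ _ _ _ _)).
rewrite !sqrt_scale -/Nu.
rewrite (_ : (- (a * c1 x0)) ^+ 2 + (- (a * c2 x0)) ^+ 2 + (- (a * c3 x0)) ^+ 2
   = (a * c1 x0) ^+ 2 + (a * c2 x0) ^+ 2 + (a * c3 x0) ^+ 2); last by ring.
rewrite sqrt_scale -/X.
rewrite (_ : (- u1) ^+ 2 + (- u2) ^+ 2 + (- u3) ^+ 2 = u1 ^+ 2 + u2 ^+ 2 + u3 ^+ 2); last by ring.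
rewrite -/Nu (ger0_norm (ltW t0)) (ger0_norm (_ : 0 <= 1 - t)); last lra.
have a0 : 0 <= `|a| by [].
have hA : `|a| * X <= Nu * X by nra.
have hB : Nu * X <= delta * eps / 4 * X by nra.
have hC : eps * X <= rho p m * X by nra.
have hD : delta * eps / 4 * X <= 3 * delta / 4 by nra.
have hE : t * Nu < t * (delta * eps / 4) by nra.
have hF : eps <= 2 by lra.
have td := mulr_gt0 t0 hdelta.
have hG : t * (delta * eps / 4) <= t * delta / 2 by nra.
have hH : (1 - t) * (`|a| * X) <= (1 - t) * (3 * delta / 4) by nra.
nra.
Qed.
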